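(* Let $n\le l$ be positive integers, let $L_l=\{a_1<a_2<\dots<a_l\}$ be the linearly ordered semilattice of $l$ elements (with $a_ia_j=a_{\min(i,j)}$), and let $t(X)=s(X)$ be an equation over $L_l$ in the variables $X=\{x_1,\dots,x_n\}$ in which every variable $x_1,\dots,x_n$ occurs. Let $\sigma$ be a permutation of $\{1,\dots,n\}$ of the first or of the second kind with respect to this equation. Then the set $Y_\sigma\subseteq L_l^n$ is irreducible, and its coordinate semilattice satisfies $\Gamma(Y_\sigma)\cong L_n$ if $\sigma$ is of the first kind and $\Gamma(Y_\sigma)\cong L_{n-1}$ if $\sigma$ is of the second kind.
   Context: A term $t(X)$ is a commutative word in the letters $x_1,\dots,x_n$; $\mathrm{Var}(t)$ is the set of variables occurring in $t$. An equation is an ordered pair of terms written $t(X)=s(X)$; an inequality $t\le s$ abbreviates the equation $ts=t$. A point $P\in L_l^n$ is a solution of $t(X)=s(X)$ if $t(P)=s(P)$ in $L_l$. For a system $S$ of equations, $V(S)$ is the set of common solutions; a set $Y\subseteq L_l^n$ is algebraic if $Y=V(S)$ for some system $S$, and an algebraic set is irreducible if it is not a proper finite union of other algebraic sets. For an algebraic set $Y$, terms $t,s$ are $\sim_Y$-equivalent if $t(P)=s(P)$ for all $P\in Y$; the set of equivalence classes, with the induced multiplication, is the coordinate semilattice $\Gamma(Y)$. A permutation $\sigma$ of $\{1,\dots,n\}$ is of the first kind (for the equation $t=s$) if $x_{\sigma(1)}\in\mathrm{Var}(t)\cap\mathrm{Var}(s)$, and of the second kind if $x_{\sigma(1)}\in\mathrm{Var}(s)\setminus\mathrm{Var}(t)$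 and $x_{\sigma(2)}\in\mathrm{Var}(t)\setminus\mathrm{Var}(s)$. If $\sigma$ is of the first kind, $Y_\sigma=V(\{x_{\sigma(i)}\le x_{\sigma(i+1)}: 1\le i\le n-1\})$; if $\sigma$ is of the second kind, $Y_\sigma=V(\{x_{\sigma(1)}=x_{\sigma(2)}\}\cup\{x_{\sigma(i)}\le x_{\sigma(i+1)}: 2\le i\le n-1\})$. *)

(* Defs.v *)
From mathcomp Require Import all_boot all_order perm.
Set Implicit Arguments. Unset Strict Implicit. Unset Printing Implicit Defensive.

Section Semilattice.
Variables (n l : nat).

(* L_l = {a_1 < ... < a_l} is modelled by 'I_l (a_i <-> i-1), product = min. *)
Definition point := {ffun 'I_n -> 'I_l}.

(* A term = a (nonempty) commutative word in x_1..x_n, i.e. an exponent vector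
   with at least one positive exponent. *)
Definition term := {f : {ffun 'I_n -> nat} | [exists i, 0 < f i]}.

Definition Var (t : term) : {set 'I_n} := [set i | 0 < sval t i].

(* value of t at P in L_l (as the nat index of the element of 'I_l);
   Var t is nonempty so the default l is never attained. *)
Definition eval (t : term) (P : point) : nat :=
  \big[minn/l]_(i in Var t) (nat_of_ord (P i)).

Definition mul_fun (t s : term) : {ffun 'I_n -> nat} :=
  [ffun i => sval t i + sval s i].

Lemma mul_ok (t s : term) : [exists i, 0 < mul_fun t s i].
Proof.
have /existsP [i Hi] := valP t; apply/existsP; exists i.
by rewrite ffunE /=; exact: leq_trans Hi (leq_addr _ _).
Qed.

Definition mul (t s : term) : term := exist _ (mul_fun t s) (mul_ok t s).

Definition var_fun (i : 'I_n) : {ffun 'I_n -> nat} := [ffun j => nat_of_bool (j == i)].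

Lemma var_ok (i : 'I_n) : [exists j, 0 < var_fun i j].
Proof. by apply/existsP; exists i; rewrite ffunE eqxx. Qed.

Definition var (i : 'I_n) : term := exist _ (var_fun i) (var_ok i).

Definition equation := (term * term)%type.

(* inequality t <= s abbreviates the equation t s = t *)
Definition ineq (t s : term) : equation := (mul t s, t).

Definition solution (P : point) (e : equation) : Prop := eval e.1 P = eval e.2 P.

Definition pset := point -> Prop.

Definition V (S : equation -> Prop) : pset := fun P => forall e, S e -> solution P e.

Definition algebraic (Y : pset) : Prop := exists S, forall P, Y P <-> V S P.

Definition irreducible (Y : pset) : Prop :=
  algebraic Y /\
  forall (k : nat) (Z : 'I_k -> pset),
    (forall i, algebraic (Z i)) ->
    (forall P, Y P <-> exists i, Z i P) ->
    exists i, forall P, Y P <-> Z i P.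

Definition equivY (Y : pset) (t s : term) : Prop := forall P, Y P -> eval t P = eval s P.

(* Gamma(Y) is isomorphic to L_k: an explicit isomorphism from the set of
   ~_Y-classes (with induced multiplication) onto 'I_k with min. *)
Definition coord_iso_L (Y : pset) (k : nat) : Prop :=
  exists f : term -> 'I_k,
    (forall t s, f t = f s <-> equivY Y t s) /\
    (forall a : 'I_k, exists t, f t = a) /\
    (forall t s, nat_of_ord (f (mul t s)) = minn (f t) (f s)).

(* kinds of permutations (0-based: sigma(1) is sigma at index 0) *)
Definition first_kind (t s : term) (sg : {perm 'I_n}) : Prop :=
  exists i : 'I_n, nat_of_ord i = 0 /\ sg i \in Var t :&: Var s.

Definition second_kind (t s : term) (sg : {perm 'I_n}) : Prop :=
  exists i j : 'I_n, nat_of_ord i = 0 /\ nat_of_ord j = 1 /\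
    sg i \in Var s :\: Var t /\ sg j \in Var t :\: Var s.

Definition Y1 (sg : {perm 'I_n}) : pset :=
  V (fun e => exists i j : 'I_n, nat_of_ord j = (nat_of_ord i).+1 /\
                 e = ineq (var (sg i)) (var (sg j))).

Definition Y2 (sg : {perm 'I_n}) : pset :=
  V (fun e => (exists i j : 'I_n, nat_of_ord i = 0 /\ nat_of_ord j = 1 /\
                 e = (var (sg i), var (sg j))) \/
              (exists i j : 'I_n, 1 <= nat_of_ord i /\ nat_of_ord j = (nat_of_ord i).+1 /\
                 e = ineq (var (sg i)) (var (sg j)))).

End Semilattice.

(* Main.v *)
Require Import Defs.
From mathcomp Require Import all_boot all_order perm.
From mathcomp Require Import fingroup.

Section Gen.
Variables (n l : nat).

Lemma bigmin_le_seq (r : seq 'I_n) (F : 'I_n -> nat) j :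
  j \in r -> \big[minn/l]_(i <- r) F i <= F j.
Proof.
elim: r => // a r IH; rewrite inE big_cons => /orP[/eqP->|H].
  exact: geq_minl.
exact: leq_trans (geq_minr _ _) (IH H).
Qed.

Lemma eval_spec (t : term n) (P : point n l) :
  (exists2 i, i \in Var t & eval t P = P i) /\
  (forall j, j \in Var t -> eval t P <= P j).
Proof.
have L : forall j, j \in Var t -> eval t P <= P j.
  move=> j Hj; rewrite /eval -big_filter; apply: bigmin_le_seq.
  by rewrite mem_filter Hj mem_index_enum.
split=> //.
have : eval t P = l \/ exists2 i, i \in Var t & eval t P = P i.
  rewrite /eval; apply: (big_ind (fun x => x = l \/ exists2 i, i \in Var t & x = P i)).
  - by left.
  - by move=> x y Hx Hy; rewrite /minn; case: ltnP.
  - by move=> i Hi; right; exists i.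
case=> // E.
have /existsP [i Hi] := valP t.
have Hi' : i \in Var t by rewrite inE.
have := L i Hi'; rewrite E => h.
by have := leq_ltn_trans h (ltn_ord (P i)); rewrite ltnn.
Qed.

Lemma eval_uniq (t : term n) (P : point n l) (x : nat) (i : 'I_n) :
  i \in Var t -> x = P i -> (forall j, j \in Var t -> x <= P j) -> eval t P = x.
Proof.
move=> Hi Ex Lx; have [[i' Hi' E'] L] := eval_spec t P.
apply/eqP; rewrite eqn_leq; apply/andP; split.
  by rewrite Ex; exact: L.
by rewrite E'; exact: Lx.
Qed.

Lemma Var_var (k i : 'I_n) : (i \in Var (var k)) = (i == k).
Proof. by rewrite inE /= ffunE; case: (i == k). Qed.

Lemma eval_var (k : 'I_n) (P : point n l) : eval (var k) P = P k.
Proof.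
apply: (@eval_uniq _ _ _ k).
  by rewrite Var_var.
  by [].
by move=> j; rewrite Var_var => /eqP ->.
Qed.

Lemma Var_mul (t s : term n) (i : 'I_n) :
  (i \in Var (Defs.mul t s)) = (i \in Var t) || (i \in Var s).
Proof. by rewrite !inE /= ffunE addn_gt0. Qed.

Lemma eval_mul (t s : term n) (P : point n l) :
  eval (Defs.mul t s) P = minn (eval t P) (eval s P).
Proof.
have [[it Ht Et] Lt] := eval_spec t P.
have [[is0 Hs Es] Ls] := eval_spec s P.
case: (leqP (eval t P) (eval s P)) => h.
  apply: (@eval_uniq _ _ _ it) => //.
    by rewrite Var_mul Ht.
  move=> j; rewrite Var_mul => /orP [] Hj; first exact: Lt.
  exact: leq_trans h (Ls j Hj).
apply: (@eval_uniq _ _ _ is0) => //.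
  by rewrite Var_mul Hs orbT.
move=> j; rewrite Var_mul => /orP [] Hj; last exact: Ls.
exact: leq_trans (ltnW h) (Lt j Hj).
Qed.

Lemma eval_mono (t : term n) (P P0 : point n l) (m : nat -> nat) (N : nat) :
  (forall a b, a <= b -> b < N -> m a <= m b) -> (forall i, P0 i < N) ->
  (forall i, (P i : nat) = m (P0 i)) -> eval t P = m (eval t P0).
Proof.
move=> Hm HN HP; have [[i0 Hi0 E0] L0] := eval_spec t P0.
rewrite E0; apply: (@eval_uniq _ _ _ i0) => //.
move=> j Hj; rewrite HP; apply: Hm; last exact: HN.
by rewrite -E0; exact: L0.
Qed.

Lemma eval_lt (t : term n) (P : point n l) N :
  (forall i, (P i : nat) < N) -> eval t P < N.
Proof. by move=> H; have [[i _ ->] _] := eval_spec t P. Qed.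

Lemma irr_gen (Y : pset n l) (P0 : point n l) : algebraic Y -> Y P0 ->
  (forall e P, Y P -> solution P0 e -> solution P e) -> irreducible Y.
Proof.
move=> Ha H0 HG; split=> // k Z HZ Hcov.
have [i Hi] := (Hcov P0).1 H0.
exists i => P; split; last by move=> HP; apply: (Hcov P).2; exists i.
move=> HP; have [S HS] := HZ i.
apply/HS => e He; apply: HG HP _.
exact: ((HS P0).1 Hi) e He.
Qed.

Lemma coord_gen (Y : pset n l) (P0 : point n l) k (hk : forall i, (P0 i : nat) < k) : Y P0 ->
  (forall e P, Y P -> solution P0 e -> solution P e) ->
  (forall a : 'I_k, exists t, eval t P0 = a) -> coord_iso_L Y k.
Proof.
move=> H0 HG Hs.
exists (fun t => Ordinal (@eval_lt t P0 k hk)); split; [|split].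
- move=> t s; split.
    by move=> /(congr1 val) /= E P HP; exact: (HG (t, s) P HP E).
  by move=> E; apply: val_inj => /=; exact: E P0 H0.
- by move=> a; have [t Ht] := Hs a; exists t; apply: val_inj.
- by move=> t s /=; exact: eval_mul.
Qed.

End Gen.

Theorem lemma1 (n l : nat) (hn : 0 < n) (hnl : n <= l) (t s : term n)
  (hall : forall i : 'I_n, i \in Var t :|: Var s) (sg : {perm 'I_n}) :
  (first_kind t s sg ->
     irreducible (@Y1 n l sg) /\ coord_iso_L (@Y1 n l sg) n) /\
  (second_kind t s sg ->
     irreducible (@Y2 n l sg) /\ coord_iso_L (@Y2 n l sg) (n - 1)).
Proof.
case: n hn hnl t s hall sg => [//|n] _ hnl t s _ sg.
split.
- move=> _.
  pose P0 : point n.+1 l :=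
    [ffun x => Ordinal (leq_trans (ltn_ord ((sg^-1)%g x)) hnl)].
  have P0E x : (P0 x : nat) = (sg^-1)%g x by rewrite ffunE.
  have Y1E (P : point n.+1 l) : Y1 sg P <->
     (forall i j : 'I_n.+1, j = i.+1 :> nat -> (P (sg i) : nat) <= P (sg j)).
    split.
      move=> HP i j Hij.
      have := HP _ (ex_intro _ i (ex_intro _ j (conj Hij erefl))).
      by rewrite /solution /= eval_mul !eval_var => /minn_idPl.
    move=> H e [i [j [Hij ->]]]; rewrite /solution /= eval_mul !eval_var.
    by apply/minn_idPl; exact: H.
  have mono (P : point n.+1 l) : Y1 sg P -> forall a b : nat, a <= b -> b < n.+1 ->
      (P (sg (inord a)) : nat) <= P (sg (inord b)).
    move/Y1E=> H a; elim=> [|b IH] hab hb.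
      by rewrite leqn0 in hab; rewrite (eqP hab).
    rewrite leq_eqVlt in hab; case/orP: hab => [/eqP->//|hab].
    rewrite ltnS in hab.
    apply: leq_trans (IH hab (ltnW hb)) _.
    by apply: H; rewrite !inordK //; exact: ltnW.
  have G e (P : point n.+1 l) : Y1 sg P -> solution P0 e -> solution P e.
    move=> HP; rewrite /solution => E.
    have EM t' : eval t' P = P (sg (inord (eval t' P0))).
      apply: (@eval_mono _ _ _ _ _ (fun k => P (sg (inord k))) n.+1).
      + by move=> a b; exact: mono.
      + by move=> x; rewrite P0E.
      + by move=> x; rewrite P0E inord_val permKV.
    by rewrite !EM E.
  have HY0 : Y1 sg P0 by apply/Y1E => i j Hij; rewrite !P0E !permK Hij.
  split.
    apply: (@irr_gen _ _ _ P0) => //.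
    by eexists => P; split => H; exact H.
  apply: (@coord_gen _ _ _ P0) => //.
    by move=> x; rewrite P0E.
  by move=> a; exists (var (sg a)); rewrite eval_var P0E permK.
- move=> [i0 [j0 [Hi0 [Hj0 _]]]].
  have n1 : 0 < n by have := ltn_ord j0; rewrite Hj0.
  have hb x : ((sg^-1)%g x).-1 < n.
    move: (ltn_ord ((sg^-1)%g x)); case: (nat_of_ord ((sg^-1)%g x)) => [|m] /= hm //.
  pose P0 : point n.+1 l := [ffun x => Ordinal (ltn_trans (hb x) hnl)].
  have P0E x : (P0 x : nat) = ((sg^-1)%g x).-1 by rewrite ffunE.
  have Y2E (P : point n.+1 l) : Y2 sg P <->
     ((P (sg (inord 0)) : nat) = P (sg (inord 1))) /\
     (forall i j : 'I_n.+1, 1 <= i -> j = i.+1 :> nat -> (P (sg i) : nat) <= P (sg j)).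
    split.
      move=> HP; split.
        have := HP (var (sg (inord 0)), var (sg (inord 1))).
        rewrite /solution /= !eval_var; apply; left.
        by exists (inord 0), (inord 1); rewrite !inordK.
      move=> i j hi Hij.
      have := HP _ (or_intror (ex_intro _ i (ex_intro _ j (conj hi (conj Hij erefl))))).
      by rewrite /solution /= eval_mul !eval_var => /minn_idPl.
    move=> [H1 H] e [[i [j [hi [hj ->]]]] | [i [j [hi [hj ->]]]]].
      have -> : i = inord 0 by apply: val_inj; rewrite /= inordK.
      have -> : j = inord 1 by apply: val_inj; rewrite /= inordK.
      by rewrite /solution /= !eval_var.
    rewrite /solution /= eval_mul !eval_var.
    by apply/minn_idPl; exact: H.
  have mono (P : point n.+1 l) : Y2 sg P -> forall a b : nat, 1 <= a -> a <= b -> b < n.+1 ->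
      (P (sg (inord a)) : nat) <= P (sg (inord b)).
    move/Y2E=> [_ H] a b ha; move: b; elim=> [|b IH] hab hbn.
      by rewrite leqn0 in hab; rewrite (eqP hab).
    rewrite leq_eqVlt in hab; case/orP: hab => [/eqP->//|hab].
    rewrite ltnS in hab.
    apply: leq_trans (IH hab (ltnW hbn)) _.
    apply: H; rewrite !inordK //; try exact: ltnW.
    exact: leq_trans ha hab.
  have G e (P : point n.+1 l) : Y2 sg P -> solution P0 e -> solution P e.
    move=> HP; rewrite /solution => E.
    have EM t' : eval t' P = P (sg (inord (eval t' P0).+1)).
      apply: (@eval_mono _ _ _ _ _ (fun k => P (sg (inord k.+1))) n).
      + by move=> a b hab hbn; apply: mono.
      + by move=> x; rewrite P0E.
      + move=> x; rewrite P0E.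
        case E': ((sg^-1)%g x : nat) => [|m'] /=.
          have hx : x = sg (inord 0).
            by rewrite -[x](permKV sg); congr (sg _); apply: val_inj; rewrite /= inordK // E'.
          by rewrite {1}hx (proj1 ((Y2E P).1 HP)).
        by rewrite -E' inord_val permKV.
    by rewrite !EM E.
  have HY0 : Y2 sg P0.
    apply/Y2E; split; first by rewrite !P0E !permK !inordK.
    by move=> i j hi Hij; rewrite !P0E !permK Hij /= leq_pred.
  split.
    apply: (@irr_gen _ _ _ P0) => //.
    by eexists => P; split => H; exact H.
  apply: (@coord_gen _ _ _ P0) => //.
    by move=> x; rewrite P0E subn1.
  move=> a; exists (var (sg (inord a.+1))); rewrite eval_var P0E permK inordK //.
  by move: (ltn_ord a); rewrite {2}subn1.
Qed.
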